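(* Let $A=\{(x_k,y_k):k\in[\ell]\}\subset\mathbb N^d$, $d=m+n$. Then for all $\bar k\in[\ell]$, $$\mathbb D_{\mathrm{in}}(x_{\bar k},y_{\bar k},T_F(A))\in\mathbb N\quad\text{and}\quad\mathbb D_{\mathrm{out}}(x_{\bar k},y_{\bar k},T_F(A))\in\mathbb N.$$
   Context: $\mathbb N$ is the set of non-negative integers; $[\ell]=\{1,\dots,\ell\}$; $K=\mathbb{R}_+^m\times(-\mathbb{R}_+^n)$. The free disposal hull (FDH) technology is $T_F(A)=(A+K)\cap\mathbb{R}_+^d$. Translation distance functions: $\mathbb D_{\mathrm{in}}(x,y,T)=\sup\{\delta\in\mathbb{R}:(x-\delta1\!\!1_m,y)\in T\}$, $\mathbb D_{\mathrm{out}}(x,y,T)=\sup\{\delta\in\mathbb{R}:(x,y+\delta1\!\!1_n)\in T\}$, where $1\!\!1$ denotes a vector of ones. *)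

(* Defs.v *)
From HB Require Import structures.
From mathcomp Require Import all_boot all_order all_algebra.
From mathcomp Require Import all_classical all_reals all_analysis.
Set Implicit Arguments. Unset Strict Implicit. Unset Printing Implicit Defensive.
Import Order.TTheory GRing.Theory Num.Theory.
Local Open Scope classical_set_scope.
Local Open Scope ring_scope.

(* A point of R^d, d = m + n, is a pair (x, y) of an input vector x : 'I_m -> R
   and an output vector y : 'I_n -> R. *)
Definition nonnegv (R : realType) (k : nat) (v : 'I_k -> R) : Prop :=
  forall i, 0 <= v i.

(* Free disposal hull T_F(A) = (A + K) ∩ R_+^d, K = R_+^m × (-R_+^n). *)
Definition FDH (R : realType) (m n : nat)
    (A : set (('I_m -> R) * ('I_n -> R))) : set (('I_m -> R) * ('I_n -> R)) :=
  [set p | (exists a, A a /\ exists (u : 'I_m -> R) (v : 'I_n -> R),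
              nonnegv u /\ nonnegv v /\
              p = ((fun i => a.1 i + u i), (fun j => a.2 j - v j)))
           /\ nonnegv p.1 /\ nonnegv p.2].

Definition D_in (R : realType) (m n : nat) (x : 'I_m -> R) (y : 'I_n -> R)
    (T : set (('I_m -> R) * ('I_n -> R))) : \bar R :=
  ereal_sup ((fun d : R => d%:E) @` [set d : R | T ((fun i => x i - d), y)]).

Definition D_out (R : realType) (m n : nat) (x : 'I_m -> R) (y : 'I_n -> R)
    (T : set (('I_m -> R) * ('I_n -> R))) : \bar R :=
  ereal_sup ((fun d : R => d%:E) @` [set d : R | T (x, (fun j => y j + d))]).

(* The finite data set A = {(x_k, y_k) : k in [l]} ⊂ N^d, embedded in R^d. *)
Definition ptx (R : realType) (l m : nat) (X : 'I_l -> 'I_m -> nat) (k : 'I_l)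
  : 'I_m -> R := fun i => (X k i)%:R.
Definition pty (R : realType) (l n : nat) (Y : 'I_l -> 'I_n -> nat) (k : 'I_l)
  : 'I_n -> R := fun j => (Y k j)%:R.
Definition dataset (R : realType) (l m n : nat)
    (X : 'I_l -> 'I_m -> nat) (Y : 'I_l -> 'I_n -> nat)
  : set (('I_m -> R) * ('I_n -> R)) :=
  [set p | exists k, p = (ptx R X k, pty R Y k)].
Arguments ptx R {l m} X k.
Arguments pty R {l n} Y k.
Arguments dataset R {l m n} X Y.

(* Main.v *)
Require Import Defs.
From HB Require Import structures.
From mathcomp Require Import all_boot all_order all_algebra.
From mathcomp Require Import all_classical all_reals all_analysis.
From mathcomp Require Import lra.
Import Order.TTheory GRing.Theory Num.Theory.
Local Open Scope classical_set_scope.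
Local Open Scope ring_scope.

Lemma key (R : realType) (S : set R) (B : nat) : S 0 ->
  (forall d, S d -> d <= B%:R) ->
  (forall d, S d -> S (Num.ceil d)%:~R) ->
  exists N : nat, ereal_sup ((fun d : R => d%:E) @` S) = (N%:R)%:E.
Proof.
move=> S0 SB Sc.
pose P n := `[< S n%:R >].
have exP : exists n, P n by exists 0%N; apply/asboolP.
have ubP : forall i, P i -> (i <= B)%N.
  by move=> i /asboolP /SB; rewrite ler_nat.
case: (ex_maxnP exP ubP) => N /asboolP SN maxN.
exists N; apply/le_anti/andP; split.
  apply: ge_ereal_sup => _ [d Sd <-]; rewrite lee_fin.
  rewrite leNgt; apply/negP => Nd.
  have hc := Sc d Sd.
  have c0 : (0 <= Num.ceil d).
    by rewrite ceil_ge0; apply: lt_trans Nd; apply: (lt_le_trans (ltrN10 R)).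
  have dc := ceil_ge d.
  move: hc dc c0; case: (Num.ceil d) => // c hc dc _.
  have : P c by apply/asboolP.
  move/maxN; rewrite -(ler_nat R) => cN.
  have := lt_le_trans (lt_le_trans Nd dc) cN.
  by rewrite ltxx.
by apply: ereal_sup_ubound; exists N%:R.
Qed.

Lemma natz (R : realType) (a b : nat) : (a%:R - b%:R : R) = ((a:int) - (b:int))%:~R.
Proof. by rewrite rmorphB /=. Qed.
Lemma cle (R : realType) (d : R) (a b : nat) : d <= a%:R - b%:R -> (Num.ceil d)%:~R <= a%:R - b%:R :> R.
Proof. by rewrite natz -ceil_le_int ler_int. Qed.

Lemma cle0 (R : realType) (d : R) (a : nat) : d <= a%:R -> (Num.ceil d)%:~R <= a%:R :> R.
Proof. by move=> h; have := @cle R d a 0; rewrite !subr0; apply. Qed.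

Theorem mainTheorem9 (R : realType) (m n l : nat) (hm : (0 < m)%N) (hn : (0 < n)%N)
    (X : 'I_l -> 'I_m -> nat) (Y : 'I_l -> 'I_n -> nat) (kbar : 'I_l) :
  (exists N : nat, D_in (ptx R X kbar) (pty R Y kbar) (FDH (dataset R X Y)) = (N%:R)%:E) /\
  (exists N : nat, D_out (ptx R X kbar) (pty R Y kbar) (FDH (dataset R X Y)) = (N%:R)%:E).
Proof.
pose i0 : 'I_m := Ordinal hm.
pose j0 : 'I_n := Ordinal hn.
split.
- apply: (@key R _ (X kbar i0)).
  + split; last by split => i /=; rewrite /ptx /pty ?subr0 ?ler0n.
    exists (ptx R X kbar, pty R Y kbar); split; first by exists kbar.
    exists (fun=> 0), (fun=> 0); split; first by move=> i.
    split; first by move=> i.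
    by congr pair; apply: funext => i /=; rewrite ?subr0 ?addr0.
  + move=> d [_ [nn _]]; have := nn i0; rewrite /= /ptx; lra.
  + move=> d [[a [[k ->] [u [v [nu [nv [e1 e2]]]]]]] [nn1 nn2]].
    split; last first.
      split => // i /=; have := nn1 i; rewrite /= /ptx => h.
      by rewrite subr_ge0 cle0 //; lra.
    exists (ptx R X k, pty R Y k); split; first by exists k.
    exists (fun i => ptx R X kbar i - (Num.ceil d)%:~R - ptx R X k i), v.
    split.
      move=> i; have := congr1 (fun f => f i) e1; have := nu i.
      rewrite /ptx /= => h1 h2.
      have : d <= (X kbar i)%:R - (X k i)%:R by lra.
      move/cle; lra.
    split => //.
    by congr pair; [apply: funext => i /=; lra | exact: e2].
- apply: (@key R _ (\max_(k0 < l) Y k0 j0)%N).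
  + split; last by split => i /=; rewrite /ptx /pty ?addr0 ?ler0n.
    exists (ptx R X kbar, pty R Y kbar); split; first by exists kbar.
    exists (fun=> 0), (fun=> 0); split; first by move=> i.
    split; first by move=> i.
    by congr pair; apply: funext => i /=; rewrite ?subr0 ?addr0.
  + move=> d [[a [[k ->] [u [v [nu [nv [e1 e2]]]]]]] [nn1 nn2]].
    have := congr1 (fun f => f j0) e2; have := nv j0; have := nn2 j0.
    have hb : (Y k j0 <= \max_(k0 < l) Y k0 j0)%N by apply: leq_bigmax.
    move: hb; rewrite -(ler_nat R).
    rewrite /pty /= => hb h1 h2 h3.
    have := ler0n R (Y kbar j0); lra.
  + move=> d [[a [[k ->] [u [v [nu [nv [e1 e2]]]]]]] [nn1 nn2]].
    split; last first.
      split => // j /=; have := nn2 j; rewrite /= /pty => h.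
      have := ceil_ge d; lra.
    exists (ptx R X k, pty R Y k); split; first by exists k.
    exists u, (fun j => pty R Y k j - pty R Y kbar j - (Num.ceil d)%:~R).
    split => //.
    split.
      move=> j; have := congr1 (fun f => f j) e2; have := nv j.
      rewrite /pty /= => h1 h2.
      have : d <= (Y k j)%:R - (Y kbar j)%:R by lra.
      move/cle; lra.
    by congr pair; [exact: e1 | apply: funext => j /=; lra].
Qed.
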